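(* Give $\Sigma$ the quotient topology of the box topology. Then for any two distinct points $[X],[X']\in\Sigma$ and any closed neighborhoods $V$ of $[X]$ and $V'$ of $[X']$, we have $V\cap V'\neq\emptyset$. In particular, $\Sigma$ is not a Urysohn space.
   Context: mm-spaces are triples $(X,d_X,\mu_X)$ with $(X,d_X)$ complete separable metric and $\mu_X$ a Borel probability measure, with $X=\operatorname{supp}\mu_X$. $\mathcal{X}$ is the set of their isomorphism classes under measure-preserving isometries of supports. The box distance $\square(X,Y)$ is the infimum of $\varepsilon\ge0$ such that there exist Borel maps $\varphi,\psi$ from $[0,1)$ pushing Lebesgue measure to $\mu_X,\mu_Y$ and a Borel $I_0$ of measure $\ge1-\varepsilon$ with $|d_X(\varphi(s),\varphi(t))-d_Y(\psi(s),\psi(t))|\le\varepsilon$ on $I_0$. It induces the box topology. $\mathbb{R}_+$ acts on $\mathcal{X}$ by $tX=(X,t\,d_X,\mu_X)$. $\mathcal{X}_*=\mathcal{X}\setminus\{*\}$, and $\Sigma=\mathcal{X}_*/\mathbb{R}_+$. A Urysohn space is one in which any two distinct points have disjoint closed neighborhoods. *)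

(* Defs.v *)
From HB Require Import structures.
From mathcomp Require Import all_boot all_order all_algebra.
From mathcomp Require Import all_classical all_reals all_analysis.
From mathcomp Require Import Rstruct Rstruct_topology.
Set Implicit Arguments. Unset Strict Implicit. Unset Printing Implicit Defensive.
Import Order.TTheory GRing.Theory Num.Theory.
Local Open Scope classical_set_scope.
Local Open Scope ring_scope.

Notation RR := Rdefinitions.R.
Notation RB := (measurableTypeR RR).

Definition is_metric (T : Type) (d : T -> T -> RR) : Prop :=
  (forall x y, 0 <= d x y) /\
  (forall x y, d x y = 0 <-> x = y) /\
  (forall x y, d x y = d y x) /\
  (forall x y z, d x z <= d x y + d y z).

Definition d_open (T : Type) (d : T -> T -> RR) (U : set T) : Prop :=
  forall x, U x -> exists2 r : RR, 0 < r & forall y, d x y < r -> U y.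

Definition d_complete (T : Type) (d : T -> T -> RR) : Prop :=
  forall u : nat -> T,
    (forall e : RR, 0 < e -> exists N : nat, forall m n : nat,
        (N <= m)%N -> (N <= n)%N -> d (u m) (u n) < e) ->
    exists x : T, forall e : RR, 0 < e -> exists N : nat, forall n : nat,
        (N <= n)%N -> d (u n) x < e.

Definition d_separable (T : Type) (d : T -> T -> RR) : Prop :=
  exists s : nat -> T, forall x e, 0 < e -> exists n : nat, d x (s n) < e.

Definition d_borel (T : Type) (d : T -> T -> RR) : set (set T) :=
  <<s [set U | d_open d U] >>.

Definition is_borel_prob (T : Type) (d : T -> T -> RR) (mu : set T -> RR)
  : Prop :=
  (forall B, d_borel d B -> 0 <= mu B) /\
  mu set0 = 0 /\ mu setT = 1 /\
  (forall F : nat -> set T, (forall n, d_borel d (F n)) ->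
     (forall n m, n <> m -> F n `&` F m = set0) ->
     (fun n => \sum_(k < n) mu (F k)) @ \oo --> mu (\bigcup_k F k)).

Record mmspace := MMSpace {
  mm_carrier :> Type;
  mm_dist : mm_carrier -> mm_carrier -> RR;
  mm_mu : set mm_carrier -> RR;
  mm_metric : is_metric mm_dist;
  mm_complete : d_complete mm_dist;
  mm_separable : d_separable mm_dist;
  mm_prob : is_borel_prob mm_dist mm_mu;
  (* X = supp mu_X : every open ball has positive measure *)
  mm_full_support : forall (x : mm_carrier) (r : RR), 0 < r ->
      0 < mm_mu [set y | mm_dist x y < r]
}.

Definition is_point (X : mmspace) : Prop := forall x y : X, x = y.

Definition scaled_iso (t : RR) (X Y : mmspace) : Prop :=
  exists f : X -> Y, bijective f /\
    (forall a b : X, mm_dist (f a) (f b) = t * mm_dist a b) /\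
    (forall B : set Y, d_borel (@mm_dist Y) B ->
        mm_mu (f @^-1` B) = mm_mu B).

Definition mm_iso (X Y : mmspace) : Prop := scaled_iso 1 X Y.

(* [X] = [Y] in Sigma = X_* / R_+ *)
Definition sigma_rel (X Y : mmspace) : Prop :=
  exists2 t : RR, 0 < t & scaled_iso t X Y.

Definition I01 : set RB := [set t | 0 <= t < 1].

(* phi : [0,1) -> X Borel with phi_* (Lebesgue) = mu_X
   (phi is given on all of R; only its values on [0,1) matter) *)
Definition parameter (X : mmspace) (phi : RB -> X) : Prop :=
  forall B : set X, d_borel (@mm_dist X) B ->
    measurable (I01 `&` phi @^-1` B) /\
    lebesgue_measure (I01 `&` phi @^-1` B) = (mm_mu B)%:E.

Definition box_admissible (X Y : mmspace) (eps : RR) : Prop :=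
  0 <= eps /\
  exists (phi : RB -> X) (psi : RB -> Y) (I0 : set RB),
    parameter phi /\ parameter psi /\
    measurable I0 /\ I0 `<=` I01 /\
    ((1 - eps)%:E <= lebesgue_measure I0)%E /\
    (forall s t, I0 s -> I0 t ->
       `|mm_dist (phi s) (phi t) - mm_dist (psi s) (psi t)| <= eps).

Definition box (X Y : mmspace) : RR := inf [set eps | box_admissible X Y eps].

(* A subset of Sigma is represented by a predicate on mm-spaces that is
   invariant under sigma_rel; its elements are the classes [X] with X
   non-trivial (X not isomorphic to * ). *)
Definition sig_saturated (S : mmspace -> Prop) : Prop :=
  forall X Y, sigma_rel X Y -> S X -> S Y.

(* open in the quotient topology: its preimage in X_* is open for the
   (subspace topology of the) box topology *)
Definition sig_open (U : mmspace -> Prop) : Prop :=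
  sig_saturated U /\
  forall X, ~ is_point X -> U X ->
    exists2 e : RR, 0 < e &
      forall Y, ~ is_point Y -> box X Y < e -> U Y.

Definition sig_closed (V : mmspace -> Prop) : Prop :=
  sig_saturated V /\ sig_open (fun X => ~ V X).

Definition sig_closed_nbhd (X : mmspace) (V : mmspace -> Prop) : Prop :=
  sig_closed V /\
  exists U, sig_open U /\ U X /\
    (forall Y, ~ is_point Y -> U Y -> V Y).

Definition sigma_urysohn : Prop :=
  forall X X' : mmspace, ~ is_point X -> ~ is_point X' -> ~ sigma_rel X X' ->
    exists V V', sig_closed_nbhd X V /\ sig_closed_nbhd X' V' /\
      forall Z, ~ is_point Z -> ~ (V Z /\ V' Z).

(* Main.v *)
Set Warnings "-all".
Require Import Defs.
From HB Require Import structures.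
From mathcomp Require Import all_boot all_order all_algebra.
From mathcomp Require Import all_classical all_reals all_analysis.
From mathcomp Require Import Rstruct Rstruct_topology.
From mathcomp Require Import ring lra.
Set Implicit Arguments. Unset Strict Implicit. Unset Printing Implicit Defensive.
Import Order.TTheory GRing.Theory Num.Theory.
Local Open Scope classical_set_scope.
Local Open Scope ring_scope.

Section Generic.
Variables (T : Type) (d : T -> T -> RR).

Lemma borel_sigma : sigma_algebra setT (d_borel d).
Proof. exact: smallest_sigma_algebra. Qed.

Lemma borel_open U : d_open d U -> d_borel d U.
Proof. by move=> hU; apply: sub_gen_smallest. Qed.

Lemma borel0 : d_borel d set0.
Proof. by case: borel_sigma. Qed.

Lemma borelC A : d_borel d A -> d_borel d (~` A).
Proof. by case: borel_sigma => _ h _ /h; rewrite setTD. Qed.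

Lemma borelT : d_borel d setT.
Proof. by rewrite -setC0; apply: borelC; exact: borel0. Qed.

Lemma borel_bigcup (F : nat -> set T) : (forall n, d_borel d (F n)) -> d_borel d (\bigcup_n F n).
Proof. by case: borel_sigma => _ _ h; exact: h. Qed.

Lemma borelU A B : d_borel d A -> d_borel d B -> d_borel d (A `|` B).
Proof.
move=> hA hB.
have -> : A `|` B = \bigcup_n (if n is 0 then A else B).
  apply/seteqP; split => x.
  - by case=> h; [exists 0%N | exists 1%N].
  - by case=> -[|n] _ h; [left|right].
by apply: borel_bigcup => -[|n].
Qed.

Lemma borelI A B : d_borel d A -> d_borel d B -> d_borel d (A `&` B).
Proof.
move=> hA hB; rewrite -[A `&` B]setCK setCI.
by apply: borelC; apply: borelU; apply: borelC.
Qed.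

Lemma borelD A B : d_borel d A -> d_borel d B -> d_borel d (A `\` B).
Proof. by move=> hA hB; rewrite setDE; apply: borelI => //; apply: borelC. Qed.

Hypothesis dm : is_metric d.

Lemma ball_open x r : d_open d [set y | d x y < r].
Proof.
case: dm => d0 [dE [dC dT]].
move=> y /= hy; exists (r - d x y); first by rewrite subr_gt0.
move=> z hz /=; have := dT x y z; intros; lra.
Qed.

End Generic.

Lemma borel_pre (T1 T2 : Type) (d1 : T1 -> T1 -> RR) (d2 : T2 -> T2 -> RR) (f : T1 -> T2) :
  (forall U, d_open d2 U -> d_open d1 (f @^-1` U)) ->
  forall B, d_borel d2 B -> d_borel d1 (f @^-1` B).
Proof.
move=> hf B hB.
have : [set B | d_borel d1 (f @^-1` B)] B; last by [].
apply: (smallest_sub _ _ hB).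
  split => /=.
  - exact: borel0.
  - by move=> A hA; rewrite setTD; exact: borelC.
  - by move=> F hF; rewrite preimage_bigcup; exact: borel_bigcup.
by move=> U hU /=; apply: borel_open; exact: hf.
Qed.

Lemma dirac_cvg (T : Type) (F : nat -> set T) (p : T) (a : RR) :
  (forall n m, n <> m -> F n `&` F m = set0) ->
  (fun n => \sum_(k < n) (if `[< F k p >] then a else 0)) @ \oo -->
  (if `[< (\bigcup_k F k) p >] then a else 0).
Proof.
move=> dj.
case: (pselect (exists k, F k p)) => [[k hk]|hn]; last first.
  rewrite asboolF; last by case=> i _ hi; apply: hn; exists i.
  apply: cvg_near_cst; apply: nearW => n; rewrite big1 // => i _.
  by rewrite asboolF // => hi; apply: hn; exists i.
rewrite asboolT; last by exists k.
have term : forall i, (if `[< F i p >] then a else 0) = (if i == k then a else 0).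
  move=> i; case: eqP => [->|ik]; first by rewrite asboolT.
  rewrite asboolF // => hi.
  have : (F i `&` F k) p by split.
  by rewrite dj.
have hs : forall n, \sum_(i < n) (if `[< F i p >] then a else 0) = if (k < n)%N then a else 0.
  elim=> [|n IH]; first by rewrite big_ord0.
  rewrite big_ord_recr /= IH term.
  case: (ltngtP k n) => hkn.
  - by rewrite ifT ?addr0 // ltnS ltnW.
  - by rewrite ifF ?addr0 // ltnS leqNgt hkn.
  - by rewrite ifT ?add0r // hkn.
apply: cvg_near_cst; exists k.+1 => // n /= hn.
by rewrite hs hn.
Qed.

Section Prob.
Variables (T : Type) (d : T -> T -> RR) (mu : set T -> RR).
Hypothesis hp : is_borel_prob d mu.

Lemma mu_ge0 A : d_borel d A -> 0 <= mu A.
Proof. by case: hp => h _; exact: h. Qed.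

Lemma mu0 : mu set0 = 0.
Proof. by case: hp => _ [h _]. Qed.

Lemma muU A B : d_borel d A -> d_borel d B -> A `&` B = set0 ->
  mu (A `|` B) = mu A + mu B.
Proof.
move=> hA hB hAB.
case: hp => _ [_ [_ hs]].
pose F := fun n : nat => if n is 0 then A else if n is 1 then B else set0.
have hF : forall n, d_borel d (F n).
  by move=> [|[|n]] //=; exact: borel0.
have dF : forall n m, n <> m -> F n `&` F m = set0.
  move=> [|[|n]] [|[|m]] //= _; rewrite ?setI0 ?set0I //; by rewrite setIC.
have hU : \bigcup_n F n = A `|` B.
  apply/seteqP; split => x.
  - by case=> -[|[|n]] _ //= h; [left|right].
  - by case=> h; [exists 0%N | exists 1%N].
have h1 := hs F hF dF; rewrite hU in h1.
have h2 : (fun n => \sum_(k < n) mu (F k)) @ \oo --> mu A + mu B.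
  apply: cvg_near_cst; exists 2%N => // -[|[|n]] //= _.
  rewrite !big_ord_recl /= big1 ?addr0 ?addrA // => i _.
  exact: mu0.
by rewrite -(cvg_lim (@Rhausdorff RR) h1) (cvg_lim (@Rhausdorff RR) h2).
Qed.

Hypothesis dm : is_metric d.

Lemma ball_big (x0 : T) (eta : RR) : 0 < eta ->
  exists2 R : RR, 0 < R & 1 - eta <= mu [set y | d x0 y < R].
Proof.
move=> he.
case: hp => _ [_ [mT hs]].
pose B := fun n : nat => [set y | d x0 y < n%:R].
have hB : forall n, d_borel d (B n) by move=> n; apply: borel_open; exact: ball_open.
pose F := fun n => B n.+1 `\` B n.
have hF : forall n, d_borel d (F n) by move=> n; apply: borelD.
have dF : forall n m, n <> m -> F n `&` F m = set0.
  have key : forall n m, (n < m)%N -> F n `&` F m = set0.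
    move=> n m nm; apply/seteqP; split => // y [[h1 h2] [h3 h4]].
    apply: h4; rewrite /B /=.
    apply: (lt_le_trans h1); rewrite ler_nat //.
  move=> n m /eqP; rewrite neq_ltn => /orP[nm|mn]; first exact: key.
  by rewrite setIC; exact: key.
have hU : \bigcup_n F n = setT.
  apply/seteqP; split => // y _.
  case: dm => d0 _.
  exists (Num.trunc (d x0 y)) => //.
  have := truncn_itv (d0 x0 y) => /andP[h1 h2].
  split; first by [].
  by rewrite /B /= ltNge h1.
have hsum : forall n, \sum_(k < n) mu (F k) = mu (B n).
  elim=> [|n IH].
    rewrite big_ord0 (_ : B 0%N = set0) ?mu0 //.
    apply/seteqP; split => // y; rewrite /B /=.
    case: dm => d0 _; have := d0 x0 y; intros; lra.
  rewrite big_ord_recr /= IH -muU //.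
    congr (mu _); apply/seteqP; split => y.
    - by case => [h|[h _]] //; rewrite /B /=; apply: (lt_le_trans h); rewrite ler_nat.
    - by move=> h; case: (pselect (B n y)) => hy; [left|right].
  by apply/seteqP; split => // y [h1 [_ h2]].
have := hs F hF dF; rewrite hU mT.
move=> H0; have [N _ hN] := proj1 (@cvgrPdist_lt RR RR^o nat \oo _ _ _) H0 eta he.
exists (N.+1%:R); first by rewrite ltr0Sn.
have := hN N.+1 (leqnSn N); rewrite /= hsum.
rewrite ltr_norml => /andP[_ h]; intros; lra.
Qed.

End Prob.

Definition Ddist (X : mmspace) (x0 : X) (c L : RR) (a b : option X) : RR :=
  match a, b with
  | Some x, Some y => c * mm_dist x y
  | Some x, None => L + c * mm_dist x0 x
  | None, Some y => L + c * mm_dist x0 y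
  | None, None => 0
  end.

Arguments Ddist {X}.

Definition Dmu (X : mmspace) (s : RR) (B : set (option X)) : RR :=
  (1 - s) * mm_mu (Some @^-1` B) + s * (if `[< B None >] then 1 else 0).
Arguments Dmu : clear implicits.

Lemma d0 (X : mmspace) : forall x y : X, 0 <= mm_dist x y. Proof. by case: (@mm_metric X). Qed.
Lemma dE (X : mmspace) : forall x y : X, mm_dist x y = 0 <-> x = y. Proof. by case: (@mm_metric X) => _ []. Qed.
Lemma dC (X : mmspace) : forall x y : X, mm_dist x y = mm_dist y x. Proof. by case: (@mm_metric X) => _ [_ []]. Qed.
Lemma dT (X : mmspace) : forall x y z : X, mm_dist x z <= mm_dist x y + mm_dist y z.
Proof. by case: (@mm_metric X) => _ [_ [_ h]]. Qed.

Lemma ctri (X : mmspace) (c : RR) (hc : 0 <= c) (x y z : X) :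
  c * mm_dist x z <= c * mm_dist x y + c * mm_dist y z.
Proof. rewrite -mulrDr; apply: ler_wpM2l => //; exact: dT. Qed.

Lemma cge0 (X : mmspace) (c : RR) (hc : 0 <= c) (x y : X) : 0 <= c * mm_dist x y.
Proof. exact: mulr_ge0 hc (d0 x y). Qed.


Lemma Dmetric (X : mmspace) (x0 : X) (c L : RR) (hc : 0 < c) (hL : 0 < L) : is_metric (Ddist x0 c L).
Proof.
split.
  move=> [x|] [y|] /=.
  - exact: mulr_ge0 (ltW hc) (d0 x y).
  - have : 0 <= c * mm_dist x0 x := mulr_ge0 (ltW hc) (d0 x0 x); move=> H; lra.
  - have : 0 <= c * mm_dist x0 y := mulr_ge0 (ltW hc) (d0 x0 y); intros; lra.
  - lra.
split.
  move=> [x|] [y|] /=; split.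
  - move=> h; congr Some; apply/dE; intros; nra.
  - by case=> ->; have := (dE y y).2 erefl => ->; rewrite mulr0.
  - move=> h; exfalso; have : 0 <= c * mm_dist x0 x := mulr_ge0 (ltW hc) (d0 x0 x); intros; lra.
  - by [].
  - move=> h; exfalso; have : 0 <= c * mm_dist x0 y := mulr_ge0 (ltW hc) (d0 x0 y); intros; lra.
  - by [].
  - by [].
  - by [].
split.
  by move=> [x|] [y|] //=; rewrite dC.
move=> [x|] [y|] [z|] /=.
- have := ctri (ltW hc) x y z; intros; lra.
- have := ctri (ltW hc) x0 y x; rewrite (dC y x); intros; lra.
- have := ctri (ltW hc) x x0 z; rewrite (dC x x0); intros; lra.
- have := cge0 (ltW hc) x0 x; intros; lra.
- have := ctri (ltW hc) x0 y z; intros; lra.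
- have := cge0 (ltW hc) x0 y; intros; lra.
- have := cge0 (ltW hc) x0 z; intros; lra.
- lra.
Qed.

Lemma Dcomplete (X : mmspace) (x0 : X) (c L : RR) (hc : 0 < c) (hL : 0 < L) : d_complete (Ddist x0 c L).
Proof.
move=> u hu.
have [N hN] := hu L hL.
case eN : (u N) => [x|].
- pose v n := if u n is Some y then y else x0.
  have hv : forall n, (N <= n)%N -> u n = Some (v n).
    move=> n hn; have := hN N n (leqnn N) hn; rewrite eN /v.
    case: (u n) => [y|] //= h.
    exfalso; have := cge0 (ltW hc) x0 x; intros; lra.
  have cv : forall e : RR, 0 < e -> exists N0 : nat, forall m n : nat,
      (N0 <= m)%N -> (N0 <= n)%N -> mm_dist (v m) (v n) < e.
    move=> e he; have [M hM] := hu (e * c) (mulr_gt0 he hc).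
    exists (maxn N M) => m n hm hn.
    have := hM m n (leq_trans (leq_maxr _ _) hm) (leq_trans (leq_maxr _ _) hn).
    rewrite (hv m (leq_trans (leq_maxl _ _) hm)) (hv n (leq_trans (leq_maxl _ _) hn)) /=.
    nra.
  have [y hy] := @mm_complete X v cv.
  exists (Some y) => e he.
  have [M hM] := hy (e / c) (divr_gt0 he hc).
  exists (maxn N M) => n hn.
  rewrite (hv n (leq_trans (leq_maxl _ _) hn)) /=.
  have := hM n (leq_trans (leq_maxr _ _) hn).
  have ec : e / c * c = e by rewrite divfK // gt_eqF.
  nra.
- exists None => e he; exists N => n hn.
  have := hN N n (leqnn N) hn; rewrite eN.
  case: (u n) => [y|] //= h.
  exfalso; have := cge0 (ltW hc) x0 y; intros; lra.
Qed.

Lemma Dsep (X : mmspace) (x0 : X) (c L : RR) (hc : 0 < c) : d_separable (Ddist x0 c L).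
Proof.
have [sx hsx] := @mm_separable X.
exists (fun n => if n is n'.+1 then Some (sx n') else None).
move=> [x|] e he.
- have [n hn] := hsx x (e / c) (divr_gt0 he hc); exists n.+1 => /=.
  have ec : e / c * c = e by rewrite divfK // gt_eqF.
  nra.
- by exists 0%N.
Qed.

Lemma Some_open (X : mmspace) (x0 : X) (c L : RR) (hc : 0 < c) U : d_open (Ddist x0 c L) U -> d_open (@mm_dist X) (Some @^-1` U).
Proof.
move=> hU y /= hy; have [r hr hr'] := hU _ hy.
exists (r / c); first exact: divr_gt0.
move=> z hz; apply: hr' => /=.
have ec : r / c * c = r by rewrite divfK // gt_eqF.
nra.
Qed.

Lemma Some_borel (X : mmspace) (x0 : X) (c L : RR) (hc : 0 < c) B : d_borel (Ddist x0 c L) B -> d_borel (@mm_dist X) (Some @^-1` B).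
Proof. exact: borel_pre (@Some_open X x0 c L hc) B. Qed.


Lemma Dprob (X : mmspace) (x0 : X) (c L s : RR) (hc : 0 < c) (hs0 : 0 < s) (hs1 : s < 1) : is_borel_prob (Ddist x0 c L) (Dmu X s).
Proof.
split.
  move=> B hB; rewrite /Dmu.
  apply: addr_ge0; first apply: mulr_ge0.
  - by rewrite subr_ge0 ltW.
  - exact: (mu_ge0 (@mm_prob X) (@Some_borel X x0 c L hc B hB)).
  case: ifP => _; rewrite ?mulr1 ?mulr0 //; exact: ltW.
split.
  rewrite /Dmu asboolF //.
  have -> : Some @^-1` set0 = set0 :> set X by [].
  rewrite (mu0 (@mm_prob X)); intros; lra.
split.
  rewrite /Dmu asboolT //.
  have -> : Some @^-1` setT = setT :> set X by [].
  case: (@mm_prob X) => _ [_ [-> _]]; intros; lra.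
move=> F hF dF.
have hF' : forall n, d_borel (@mm_dist X) (Some @^-1` F n).
  by move=> n; apply: (@Some_borel X x0 c L hc).
have dF' : forall n m, n <> m -> (Some @^-1` F n) `&` (Some @^-1` F m) = set0 :> set X.
  move=> n m nm; apply/seteqP; split => // y [h1 h2].
  have : (F n `&` F m) (Some y) by split.
  by rewrite dF.
have h1 : (fun n => \sum_(k < n) mm_mu (Some @^-1` F k)) @ \oo -->
    mm_mu (\bigcup_k (Some @^-1` F k)).
  by case: (@mm_prob X) => _ [_ [_ hs]]; apply: hs.
have h2 := @dirac_cvg _ F None 1 dF.
have -> : (fun n => \sum_(k < n) Dmu X s (F k)) =
   (fun n => (1 - s) * \sum_(k < n) mm_mu (Some @^-1` F k) +
      s * \sum_(k < n) (if `[< F k None >] then 1 else 0)).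
  by apply/funext => n; rewrite /Dmu big_split /= -!mulr_sumr.
rewrite /Dmu preimage_bigcup.
exact: (@cvgD _ RR^o _ _ _ _ _ _ _ (cvgMl_tmp (a:=1-s) h1) (cvgMl_tmp (a:=s) h2)).
Qed.

Lemma Dfull (X : mmspace) (x0 : X) (c L : RR) (hc : 0 < c) (hL : 0 < L) (s : RR) (hs0 : 0 < s) (hs1 : s < 1) (x : option X) (r : RR) : 0 < r ->
  0 < Dmu X s [set y | Ddist x0 c L x y < r].
Proof.
move=> hr; rewrite /Dmu.
case: x => [a|].
- have -> : Some @^-1` [set y | Ddist x0 c L (Some a) y < r] =
      [set y | mm_dist a y < r / c].
    apply/seteqP; split => y /=; rewrite ltr_pdivlMr // mulrC //.
  have := mm_full_support a (divr_gt0 hr hc).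
  case: ifP => _; intros; nra.
- rewrite asboolT //.
  have : d_borel (@mm_dist X) (Some @^-1` [set y | Ddist x0 c L None y < r]).
    apply: (@Some_borel X x0 c L hc); apply: borel_open; apply: ball_open; exact: (@Dmetric X x0 c L hc hL).
  move/(mu_ge0 (@mm_prob X)); intros; nra.
Qed.


Definition attach (X : mmspace) (x0 : X) (c L s : RR)
  (hc : 0 < c) (hL : 0 < L) (hs0 : 0 < s) (hs1 : s < 1) : mmspace :=
  @MMSpace (option X) (Ddist x0 c L) (Dmu X s) (@Dmetric X x0 c L hc hL)
    (@Dcomplete X x0 c L hc hL) (@Dsep X x0 c L hc) (@Dprob X x0 c L s hc hs0 hs1)
    (@Dfull X x0 c L hc hL s hs0 hs1).

Lemma aff_meas (k b : RR) : measurable_fun setT (fun t : RB => ((t - b) / k : RB)).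
Proof.
apply: (@measurable_realfun.measurable_funM _ _ _ _ (fun t : RB => t - b) (fun _ => k^-1)) => //.
exact: (@measurable_realfun.measurable_funB _ _ _ _ (fun t : RB => t) (fun _ => b)).
Qed.

Lemma leb_affine (k b : RR) (A : set RB) : 0 < k -> measurable A ->
  measurable ((fun t : RB => (t - b) / k) @^-1` A) /\
  lebesgue_measure ((fun t : RB => (t - b) / k) @^-1` A) = (k%:E * lebesgue_measure A)%E.
Proof.
move=> k0 mA.
have mh := aff_meas k b.
have mpre : forall B : set RB, measurable B -> measurable ((fun t : RB => (t - b) / k) @^-1` B).
  by move=> B mB; rewrite -[X in measurable X]setTI; exact: mh.
split; first exact: mpre.
have k1 : 0 <= k^-1 by rewrite invr_ge0 ltW.
pose k' : {nonneg RR} := NngNum k1.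
pose pf := measure_function_pushforward__canonical__measure_function_Measure (@lebesgue_measure RR) mh.
pose nu := mscale k' pf.
have H : forall X, measurable X -> lebesgue_measure X = nu X.
  apply: lebesgue_measure_unique => _ [[x y] _ <-] /=.
  rewrite /nu /mscale /pf /= /pushforward.
  have -> : (fun t : RR => ((t - b) / k)%R) @^-1` `]x, y] = `](k * x + b), (k * y + b)]%classic.
    apply/seteqP; split => t /=; rewrite !in_itv /= => /andP[h1 h2]; apply/andP; split.
    - by move: h1; rewrite ltr_pdivlMr // => ?; nra.
    - by move: h2; rewrite ler_pdivrMr // => ?; nra.
    - by rewrite ltr_pdivlMr //; nra.
    - by rewrite ler_pdivrMr //; nra.
  rewrite !lebesgue_measure_itv /= !lte_fin.
  have -> : (k * x + b < k * y + b) = (x < y).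
    by rewrite ltrD2r ltr_pM2l.
  case: ifP => _; last by rewrite mule0.
  rewrite -!EFinD -EFinM; congr (_%:E).
  by rewrite opprD addrACA subrr addr0 -mulrBr mulrA mulVf ?mul1r // gt_eqF.
rewrite (H A mA) /nu /mscale /pf /= /pushforward.
rewrite muleA -EFinM divff ?mul1e //; last by rewrite gt_eqF.
Qed.


Definition Ptd (x y : unit) : RR := 0.
Definition Ptmu (B : set unit) : RR := if `[< B tt >] then 1 else 0.

Lemma Pt_metric : is_metric Ptd.
Proof.
rewrite /Ptd; split; first by [].
split; first by move=> [] []. 
split; first by [].
by move=> _ _ _; rewrite addr0.
Qed.

Lemma Pt_complete : d_complete Ptd.
Proof. by move=> u _; exists tt => e he; exists 0%N. Qed.

Lemma Pt_sep : d_separable Ptd.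
Proof. by exists (fun _ => tt) => -[] e he; exists 0%N. Qed.

Lemma Pt_prob : is_borel_prob Ptd Ptmu.
Proof.
rewrite /Ptmu; split.
  by move=> B _; case: ifP.
split; first by rewrite asboolF.
split; first by rewrite asboolT.
by move=> F _ dF; exact: (@dirac_cvg _ F tt 1 dF).
Qed.

Lemma Pt_full (x : unit) (r : RR) : 0 < r -> 0 < Ptmu [set y | Ptd x y < r].
Proof. by move=> hr; rewrite /Ptmu /Ptd asboolT. Qed.

Definition Pt : mmspace :=
  @MMSpace unit Ptd Ptmu Pt_metric Pt_complete Pt_sep Pt_prob Pt_full.

Lemma I01_itv : I01 = `[0, 1[%classic.
Proof. by apply/seteqP; split => t; rewrite /I01 /= in_itv. Qed.

Lemma I01_meas : measurable I01.
Proof. by rewrite I01_itv. Qed.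

Lemma I01_leb : lebesgue_measure I01 = 1%:E.
Proof. by rewrite I01_itv lebesgue_measure_itv /= lte_fin ltr01 oppr0 adde0. Qed.

Lemma cst_param (T : Type) (p : T) (B : set T) :
  measurable (I01 `&` (fun _ : RB => p) @^-1` B) /\
  lebesgue_measure (I01 `&` (fun _ : RB => p) @^-1` B) = (if `[< B p >] then 1 else 0)%:E.
Proof.
case: (pselect (B p)) => hp.
  have -> : I01 `&` (fun _ : RB => p) @^-1` B = I01.
    by apply/seteqP; split => t //= [].
  by rewrite asboolT //; split; [exact: I01_meas | exact: I01_leb].
have -> : I01 `&` (fun _ : RB => p) @^-1` B = set0.
  by apply/seteqP; split => t //= [].
by rewrite asboolF //; split; [exact: measurable0 | exact: measure0].
Qed.

Definition gsplit (T : Type) (s : RR) (f1 f2 : RB -> T) (t : RB) : T :=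
  if t < 1 - s then f1 ((t - 0) / (1 - s)) else f2 ((t - (1 - s)) / s).

Lemma gsplit_pre (T : Type) (s : RR) (f1 f2 : RB -> T) (B : set T) :
  0 < s -> s < 1 ->
  measurable (I01 `&` f1 @^-1` B) -> measurable (I01 `&` f2 @^-1` B) ->
  measurable (I01 `&` gsplit s f1 f2 @^-1` B) /\
  lebesgue_measure (I01 `&` gsplit s f1 f2 @^-1` B) =
   ((1 - s)%:E * lebesgue_measure (I01 `&` f1 @^-1` B) +
    s%:E * lebesgue_measure (I01 `&` f2 @^-1` B))%E.
Proof.
move=> hs0 hs1 m1 m2.
have hs1' : 0 < 1 - s by rewrite subr_gt0.
have [mA1 eA1] := leb_affine 0 hs1' m1.
have [mA2 eA2] := leb_affine (1 - s) hs0 m2.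
set A1 := (fun t : RB => (t - 0) / (1 - s)) @^-1` (I01 `&` f1 @^-1` B).
set A2 := (fun t : RB => (t - (1 - s)) / s) @^-1` (I01 `&` f2 @^-1` B).
have e1 : forall t : RB, (0 <= (t - 0) / (1 - s) < 1) = (0 <= t < 1 - s).
  move=> t; rewrite subr0 ler_pdivlMr // ltr_pdivrMr // mul0r mul1r //.
have e2 : forall t : RB, (0 <= (t - (1 - s)) / s < 1) = (1 - s <= t < 1).
  move=> t; rewrite ler_pdivlMr // ltr_pdivrMr // mul0r mul1r subr_ge0.
  by congr (_ && _); rewrite ltrBlDr addrCA subrr addr0.
have -> : I01 `&` gsplit s f1 f2 @^-1` B = A1 `|` A2.
  apply/seteqP; split => t.
  - rewrite /= /gsplit /I01 /= => -[ht hB].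
    case: ifP hB => htl hB.
      left; split => //; rewrite /I01 /= e1.
      by move: ht => /andP[-> _]; rewrite htl.
    right; split => //; rewrite /I01 /= e2; move: ht => /andP[_ ->]; rewrite andbT.
    by rewrite leNgt htl.
  - rewrite /A1 /A2 /= /gsplit /I01 /=.
    case => -[]; rewrite ?e1 ?e2 => /andP[h1 h2] hB; split.
    + by rewrite h1 /=; apply: (lt_le_trans h2); rewrite gerBl ltW.
    + by rewrite h2.
    + by rewrite h2 andbT; apply: le_trans h1; rewrite subr_ge0 ltW.
    + by rewrite ltNge h1.
have dj : A1 `&` A2 = set0.
  apply/seteqP; split => // t; rewrite /A1 /A2 /= => -[[h1 _] [h2 _]].
  move: h1 h2; rewrite /I01 /= e1 e2 => /andP[_ h1] /andP[h2 _].
  by move: (lt_le_trans h1 h2); rewrite ltxx.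
split; first exact: measurableU.
rewrite measureU //; congr (_ + _)%E; [exact: eA1 | exact: eA2].
Qed.

Arguments attach {X} x0 c L s hc hL hs0 hs1.

Lemma h1_iff (s : RR) (t : RB) : s < 1 -> (0 <= (t - 0) / (1 - s) < 1) = (0 <= t < 1 - s).
Proof. move=> hs1; have hs1' : 0 < 1 - s by rewrite subr_gt0.
by rewrite ler_pdivlMr // ltr_pdivrMr // mul0r mul1r subr0.
Qed.

Lemma attach_param (X : mmspace) (x0 : X) (c L s : RR) (hc : 0 < c) (hL : 0 < L)
  (hs0 : 0 < s) (hs1 : s < 1) (phi : RB -> X) : parameter phi ->
  parameter (X := attach x0 c L s hc hL hs0 hs1) (gsplit s (fun t => Some (phi t)) (fun _ => None)).
Proof.
move=> hp B hB.
have hB' := @Some_borel X x0 c L hc B hB.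
have [m1 e1] := hp _ hB'.
have [m2 e2] := cst_param (None : option X) B.
have [m e] := @gsplit_pre _ s (fun t => Some (phi t)) (fun _ => None) B hs0 hs1 m1 m2.
split => //.
rewrite e e2.
have e1' : lebesgue_measure (I01 `&` (fun t => Some (phi t)) @^-1` B) = (mm_mu (Some @^-1` B))%:E := e1.
by rewrite e1' /= /Dmu -!EFinM -EFinD.
Qed.

Lemma split_param (X : mmspace) (s : RR) (hs0 : 0 < s) (hs1 : s < 1) (phi : RB -> X) :
  parameter phi -> parameter (gsplit s phi phi).
Proof.
move=> hp B hB.
have [m1 e1] := hp _ hB.
have [m e] := @gsplit_pre _ s phi phi B hs0 hs1 m1 m1.
split => //.
by rewrite e e1 -!EFinM -EFinD -mulrDl subrK mul1r.
Qed.

Definition Zs (s : RR) (hs0 : 0 < s) (hs1 : s < 1) : mmspace :=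
  attach (X := Pt) tt 1 1 s ltr01 ltr01 hs0 hs1.

Lemma Zs_param (s : RR) (hs0 : 0 < s) (hs1 : s < 1) :
  parameter (X := Zs hs0 hs1) (gsplit s (fun _ => Some tt) (fun _ => None)).
Proof.
apply: (@attach_param Pt tt 1 1 s ltr01 ltr01 hs0 hs1 (fun _ => tt)).
move=> B _; have [m e] := cst_param tt B; split => //.
Qed.

Lemma box_le (X Y : mmspace) (e : RR) : box_admissible X Y e -> box X Y <= e.
Proof.
move=> h; rewrite /box.
have hl : has_lbound [set eps | box_admissible X Y eps].
  by exists 0 => x [hx _].
exact: (ge_inf hl h).
Qed.

Lemma box_noparam (X Y : mmspace) : (forall phi : RB -> X, ~ parameter phi) -> box X Y = 0.
Proof.
move=> H; rewrite /box (_ : [set eps | box_admissible X Y eps] = set0) ?inf0 //.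
apply/seteqP; split => // e [_ [phi [psi [I0 [hp _]]]]].
by case: (H phi hp).
Qed.

Lemma box_E1 (X : mmspace) (x0 : X) (L s : RR) (hL : 0 < L) (hs0 : 0 < s) (hs1 : s < 1)
  (phi : RB -> X) : parameter phi ->
  box X (attach x0 1 L s ltr01 hL hs0 hs1) <= s.
Proof.
move=> hp; apply: box_le; split; first exact: ltW.
have hs1' : 0 < 1 - s by rewrite subr_gt0.
exists (gsplit s phi phi), (gsplit s (fun t => Some (phi t)) (fun _ => None)), `[0, 1 - s[%classic.
split; first exact: split_param.
split; first exact: attach_param.
split; first by [].
split.
  move=> t; rewrite /I01 /= in_itv /= => /andP[h1 h2]; rewrite h1 /=.
  by apply: (lt_le_trans h2); rewrite gerBl ltW.
split.
  by rewrite lebesgue_measure_itv /= lte_fin hs1' oppr0 adde0.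
move=> a b; rewrite /= !in_itv /= => /andP[_ ha] /andP[_ hb].
by rewrite /gsplit ha hb /= mul1r subrr normr0 ltW.
Qed.

Lemma box_E2 (X : mmspace) (x0 : X) (c s R eta : RR) (hc : 0 < c) (hs0 : 0 < s) (hs1 : s < 1)
  (phi : RB -> X) : parameter phi -> 0 < eta ->
  1 - eta <= mm_mu [set y | mm_dist x0 y < R] -> c * R <= eta / 2 ->
  box (Zs hs0 hs1) (attach x0 c 1 s hc ltr01 hs0 hs1) <= eta.
Proof.
move=> hp he hm hR; apply: box_le; split; first exact: ltW.
have hs1' : 0 < 1 - s by rewrite subr_gt0.
pose Ball := [set y : X | mm_dist x0 y < R].
have hBall : d_borel (@mm_dist X) Ball.
  by apply: borel_open; apply: ball_open; exact: (@mm_metric X).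
have [mb eb] := hp _ hBall.
have [mA eA] := leb_affine 0 hs1' mb.
pose A := (fun t : RB => (t - 0) / (1 - s)) @^-1` (I01 `&` phi @^-1` Ball).
exists (gsplit s (fun _ => Some tt) (fun _ => None)),
  (gsplit s (fun t => Some (phi t)) (fun _ => None)), (`[1 - s, 1[%classic `|` A).
split; first exact: Zs_param.
split; first exact: attach_param.
have dj : `[1 - s, 1[%classic `&` A = set0.
  apply/seteqP; split => // t; rewrite /A /= in_itv /= => -[/andP[h1 _] [h2 _]].
  move: h2; rewrite /I01 /= h1_iff // => /andP[_ h2].
  by move: (le_lt_trans h1 h2); rewrite ltxx.
split; first by apply: measurableU => //.
split.
  move=> t [].
    rewrite /= in_itv /= => /andP[h1 h2]; rewrite /I01 /= h2 andbT.
    exact: le_trans (ltW hs1') h1.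
  rewrite /A /= /I01 /= h1_iff // => -[/andP[h1 h2] _].
  by rewrite h1 /=; apply: (lt_le_trans h2); rewrite gerBl ltW.
split.
  suff H : ((1 - eta)%R%:E <= lebesgue_measure (`[(1 - s)%R, 1%R[%classic `|` A))%E by exact: H.
  have -> : lebesgue_measure (`[(1 - s)%R, 1%R[%classic `|` A) =
     (lebesgue_measure `[(1 - s)%R, 1%R[%classic + lebesgue_measure A)%E by rewrite measureU.
  have eA' : lebesgue_measure A = ((1 - s)%:E * (mm_mu Ball)%:E)%E by rewrite -eb; exact: eA.
  rewrite eA' lebesgue_measure_itv /= lte_fin ltrBlDr ltrDl hs0 -EFinM -!EFinD lee_fin.
  have k1 : (1 - s) * (1 - eta) <= (1 - s) * mm_mu Ball := ler_wpM2l (ltW hs1') hm.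
  have k2 : (1 - s) * (1 - eta) = 1 - eta - s + s * eta by ring.
  have k3 : 0 <= s * eta := mulr_ge0 (ltW hs0) (ltW he).
  lra.
have inA : forall t, (`[1 - s, 1[%classic `|` A) t -> t < 1 - s ->
    mm_dist x0 (phi ((t - 0) / (1 - s))) < R.
  move=> t [|].
    by rewrite /= in_itv /= => /andP[h1 _] h2; move: (le_lt_trans h1 h2); rewrite ltxx.
  by rewrite /A /= => -[_ ?].
have cR : forall y : X, mm_dist x0 y < R -> c * mm_dist x0 y <= c * R.
  by move=> y hy; apply: ler_wpM2l; [exact: ltW | exact: ltW].
move=> a b ha hb; rewrite /gsplit.
case: ifP => hal; case: ifP => hbl /=; rewrite /Ptd ?mulr0 ?addr0.
- have fa := cR _ (inA a ha hal); have fb := cR _ (inA b hb hbl).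
  have ft := ctri (ltW hc) (phi ((a - 0) / (1 - s))) x0 (phi ((b - 0) / (1 - s))).
  rewrite (dC (phi ((a - 0) / (1 - s))) x0) in ft.
  have g := cge0 (ltW hc) (phi ((a - 0) / (1 - s))) (phi ((b - 0) / (1 - s))).
  rewrite ler_norml; apply/andP; split; lra.
- have fa := cR _ (inA a ha hal).
  have g := cge0 (ltW hc) x0 (phi ((a - 0) / (1 - s))).
  rewrite ler_norml; apply/andP; split; lra.
- have fb := cR _ (inA b hb hbl).
  have g := cge0 (ltW hc) x0 (phi ((b - 0) / (1 - s))).
  rewrite ler_norml; apply/andP; split; lra.
- by rewrite subrr normr0 ltW.
Qed.

Lemma Zs_nt (s : RR) (hs0 : 0 < s) (hs1 : s < 1) : ~ is_point (Zs hs0 hs1).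
Proof. by move=> h; have := h (Some tt) None. Qed.

Lemma attach_nt (X : mmspace) (x0 : X) (c L s : RR) hc hL hs0 hs1 :
  ~ is_point (attach x0 c L s hc hL hs0 hs1).
Proof. by move=> h; have := h (Some x0) None. Qed.

Lemma attach_rel (X : mmspace) (x0 : X) (c s : RR) (hc : 0 < c) (hL : 0 < 1 / c)
  (hs0 : 0 < s) (hs1 : s < 1) :
  sigma_rel (attach x0 1 (1 / c) s ltr01 hL hs0 hs1) (attach x0 c 1 s hc ltr01 hs0 hs1).
Proof.
exists c => //; exists id; split; first by exists id.
split; last by [].
move=> [a|] [b|] //=.
- by rewrite mul1r.
- by field; rewrite gt_eqF.
- by field; rewrite gt_eqF.
- by rewrite mulr0.
Qed.

Lemma closure_Z (X : mmspace) (U V : mmspace -> Prop) : ~ is_point X -> sig_open U -> U X ->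
  (forall Y, ~ is_point Y -> U Y -> V Y) -> sig_closed V ->
  exists2 e : RR, 0 < e & forall (s : RR) (hs0 : 0 < s) (hs1 : s < 1), s < e -> V (Zs hs0 hs1).
Proof.
move=> hX [Usat Uop] hUX hUV [Vsat Vop].
have [e he hU] := Uop X hX hUX.
exists e => // s hs0 hs1 hse.
case: (pselect (V (Zs hs0 hs1))) => // hV.
have Znt := @Zs_nt s hs0 hs1.
have [e2 he2 hW] := Vop.2 _ Znt hV.
case: (pselect (exists phi : RB -> X, parameter phi)) => [[phi hp]|hnp]; last first.
  have : U (Zs hs0 hs1).
    apply: hU => //; rewrite box_noparam // => phi hp; apply: hnp; by exists phi.
  by move/(hUV _ Znt).
pose x0 := phi 0.
have he2' : 0 < e2 / 2 by rewrite divr_gt0.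
have [R hR hm] := @ball_big _ _ _ (@mm_prob X) (@mm_metric X) x0 (e2 / 2) he2'.
pose c := e2 / 2 / 2 / R.
have hc : 0 < c by rewrite /c !divr_gt0.
have hcR : c * R <= e2 / 2 / 2 by rewrite /c divfK // gt_eqF.
have hL : 0 < 1 / c by rewrite divr_gt0.
have UY' : U (attach x0 1 (1 / c) s ltr01 hL hs0 hs1).
  apply: hU; first exact: attach_nt.
  exact: le_lt_trans (@box_E1 X x0 (1 / c) s hL hs0 hs1 phi hp) hse.
have UY := Usat _ _ (@attach_rel X x0 c s hc hL hs0 hs1) UY'.
have VY := hUV _ (@attach_nt _ _ _ _ _ _ _ _ _) UY.
exfalso; apply: (hW _ (@attach_nt _ _ _ _ _ _ _ _ _) _ VY).
apply: le_lt_trans (@box_E2 X x0 c s R (e2 / 2) hc hs0 hs1 phi hp he2' hm hcR) _.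
by rewrite ltr_pdivrMr // ltr_pMr // ltr1n.
Qed.

Lemma part1 (X X' : mmspace) : ~ is_point X -> ~ is_point X' ->
  forall V V' : mmspace -> Prop,
    sig_closed_nbhd X V -> sig_closed_nbhd X' V' ->
    exists Z : mmspace, ~ is_point Z /\ V Z /\ V' Z.
Proof.
move=> hX hX' V V' [hV [U [hU [hUX hUV]]]] [hV' [U' [hU' [hUX' hUV']]]].
have [e he HV] := closure_Z hX hU hUX hUV hV.
have [e' he' HV'] := closure_Z hX' hU' hUX' hUV' hV'.
pose m := Num.min (Num.min e e') 1.
have hm0 : 0 < m by rewrite /m !lt_min he he' ltr01.
have hme : m <= e by rewrite /m !ge_min lexx.
have hme' : m <= e' by rewrite /m !ge_min lexx orbT.
have hm1 : m <= 1 by rewrite /m ge_min lexx orbT.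
pose s := m / 2.
have hs0 : 0 < s by rewrite /s divr_gt0.
have hsm : s < m by rewrite /s ltr_pdivrMr // ltr_pMr // ltr1n.
have hs1 : s < 1 by exact: lt_le_trans hsm hm1.
exists (Zs hs0 hs1); split; first exact: Zs_nt.
split.
- by apply: HV; exact: lt_le_trans hsm hme.
- by apply: HV'; exact: lt_le_trans hsm hme'.
Qed.

Lemma asb_NN : `[< (None : option unit) = None >] = true.
Proof. exact: asboolT. Qed.
Lemma asb_SN : `[< Some tt = None >] = false.
Proof. exact: asboolF. Qed.

Lemma Zs_notrel (a b : RR) (ha0 : 0 < a) (ha1 : a < 1) (hb0 : 0 < b) (hb1 : b < 1) :
  a = 1 / 2 -> b = 1 / 3 -> ~ sigma_rel (Zs ha0 ha1) (Zs hb0 hb1).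
Proof.
move=> ea eb [t ht [f [[g fg gf] [_ hmu]]]].
have hB : d_borel (Ddist (X := Pt) tt 1 1) [set None].
  apply: borel_open => y /= ->; exists 1 => // -[[]|] //=.
  by rewrite /Ptd mulr0 addr0 ltxx.
have := hmu _ hB.
rewrite /= /Dmu /=; rewrite /Ptmu /=.
case E1 : (f (Some tt)) => [[]|]; case E2 : (f None) => [[]|].
- have := gf None; case: (g None) => [[]|]; by rewrite ?E1 ?E2.
- rewrite !asb_NN !asb_SN !mulr0 !mulr1 !add0r ea eb => h; lra.
- rewrite !asb_NN !asb_SN !mulr0 !mulr1 !add0r ?addr0 ea eb => h; lra.
- have := fg (Some tt); have := fg None; rewrite E1 E2 => ->; done.
Qed.

Theorem lemma3p2 :
  (forall X X' : mmspace, ~ is_point X -> ~ is_point X' -> ~ sigma_rel X X' ->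
     forall V V' : mmspace -> Prop,
       sig_closed_nbhd X V -> sig_closed_nbhd X' V' ->
       exists Z : mmspace, ~ is_point Z /\ V Z /\ V' Z)
  /\ ~ sigma_urysohn.
Proof.
split.
  by move=> X X' hX hX' _; exact: part1.
move=> hU.
have ha0 : 0 < 1 / 2 :> RR by rewrite divr_gt0.
have ha1 : 1 / 2 < 1 :> RR by rewrite ltr_pdivrMr // mul1r ltr1n.
have hb0 : 0 < 1 / 3 :> RR by rewrite divr_gt0.
have hb1 : 1 / 3 < 1 :> RR by rewrite ltr_pdivrMr // mul1r ltr1n.
have nt1 := @Zs_nt _ ha0 ha1.
have nt2 := @Zs_nt _ hb0 hb1.
have nr := @Zs_notrel _ _ ha0 ha1 hb0 hb1 erefl erefl.
have [V [V' [hV [hV' hdis]]]] := hU _ _ nt1 nt2 nr.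
have [Z [hZ [hVZ hV'Z]]] := part1 nt1 nt2 hV hV'.
exact: (hdis Z hZ (conj hVZ hV'Z)).
Qed.
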